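(* Let $a,b>0$ be constants. Let $G=(V,E)$ be a graph with $n$ vertices, $m\ge1$ edges, degeneracy $d$, clique number $\omega$ and clique distance $\sigma$, and let $(\mathcal{C},\mathcal{L})$ be a DCC representation of $G$ with $\mathcal{C}=\{C_\ell\}_{\ell\in I}$ composition-minimal, $\|\mathcal{C}\|\le a\,m$ and $|\mathcal{C}|\le b\,\sigma$. Then there is a constant $c$ depending only on $a,b$ such that $$\frac{1}{\binom{n}{2}}\sum_{\{u,v\}\subseteq V,\,u\ne v}\min\{|L_u|,|L_v|\}\le c\,\min\{\sigma,d\}\quad\text{and}\quad \frac1n\sum_{v\in V}\sum_{\ell\in L_v}|C_\ell|\le c\,\omega\,\min\{\sigma,d\}.$$
   Context: All graphs are finite, simple, undirected, with no isolated vertices; $n=|V|$, $m=|E|$. A non-edge is an unordered pair of distinct non-adjacent vertices. A clique is a vertex set inducing a complete subgraph; $\omega$ is the maximum clique size. Clique distance $\sigma:=\binom{n}{2}-m+1$. Degeneracy $d:=\max_{H}\delta_H$ over all subgraphs $H$ of $G$, where $\delta_H$ is the minimum degree of $H$. $\|\mathcal{F}\|:=\sum_{F\in\mathcal{F}}|F|$. A clique cover is an indexed family $\{C_\ell\}_{\ell\in I}$ of cliques of $G$ covering every edge; composition-minimal means that for all distinct indices $i\ne j$ there are $u\in C_i$, $v\in C_j$ with $\{u,v\}$ a non-edge. A DCC representation is a pair $(\mathcal{C},\mathcal{L})$ with $\mathcal{C}$ a clique cover and $\mathcal{L}=\{L_v\}_{v\in V}$, $L_v=\{\ell\in I: v\in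 C_\ell\}$. *)

(* Defs.v *)
From mathcomp Require Import all_boot all_order all_algebra.
From mathcomp Require Export reals.
Set Implicit Arguments. Unset Strict Implicit. Unset Printing Implicit Defensive.

Section Graphs.
Variables (T : finType) (e : rel T).

Definition simple_graph : Prop :=
  (forall x, ~~ e x x) /\ (forall x y, e x y = e y x) /\ (forall x, exists y, e x y).

Definition edges : {set {set T}} := [set [set x; y] | x in T, y in T & e x y].
Definition nverts : nat := #|T|.
Definition nedges : nat := #|edges|.

Definition clique_distance : nat := 'C(nverts, 2) - nedges + 1.

Definition non_edge (x y : T) : bool := (x != y) && ~~ e x y.

Definition is_clique (K : {set T}) : bool :=
  [forall x in K, forall y in K, (x != y) ==> e x y].

Definition clique_number : nat := \max_(K : {set T} | is_clique K) #|K|.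

Definition is_subgraph (S : {set T}) (F : {set {set T}}) : bool :=
  (S != set0) && (F \subset edges) && [forall f in F, f \subset S].

Definition sub_degree (F : {set {set T}}) (v : T) : nat := #|[set f in F | v \in f]|.

(* minimum degree of H = (S, F) (S nonempty; #|T| is a neutral upper bound) *)
Definition min_degree (S : {set T}) (F : {set {set T}}) : nat :=
  \big[minn/#|T|]_(v in S) sub_degree F v.

Definition degeneracy : nat :=
  \max_(SF : {set T} * {set {set T}} | is_subgraph SF.1 SF.2) min_degree SF.1 SF.2.

Section Cover.
Variables (I : finType) (C : I -> {set T}).

Definition clique_cover : Prop :=
  (forall l, is_clique (C l)) /\
  (forall x y, e x y -> exists l, (x \in C l) && (y \in C l)).

Definition composition_minimal : Prop :=
  forall i j : I, i != j -> exists u v, [/\ u \in C i, v \in C j & non_edge u v].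

Definition Lset (v : T) : {set I} := [set l | v \in C l].

Definition cover_norm : nat := \sum_(l : I) #|C l|.
End Cover.
End Graphs.

(* Main.v *)
Require Import Defs.
From mathcomp Require Import all_boot all_order all_algebra.
From mathcomp Require Import zify ring lra.

Import Order.TTheory GRing.Theory Num.Theory.

Lemma bin2_2 n : 'C(n,2) * 2 = n * n.-1.
Proof.
case: n => [|n] //; rewrite bin2 muln2 halfK oddM /= andNb subn0 //.
Qed.

Lemma deg_le (T : finType) (e : rel T) (F : {set {set T}}) v :
  F \subset edges e -> sub_degree F v <= #|T|.
Proof.
move=> sF; rewrite /sub_degree.
apply: (@leq_trans #|[set [set v; y] | y in [set: T]]|); last by rewrite -[X in (_ <= X)%N]cardsT leq_imset_card.
apply: subset_leq_card; apply/subsetP => f; rewrite inE => /andP[fF vf].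
have := subsetP sF f fF; case/imset2P => x y _; rewrite inE => /andP[_ _] hf.
move: vf; rewrite hf !inE => /orP[/eqP vx|/eqP vy].
- by apply/imsetP; exists y; rewrite ?inE // vx.
- by apply/imsetP; exists x; rewrite ?inE // vy setUC.
Qed.

Lemma exists_le_bigmin (T : finType) (S : {set T}) (g : T -> nat) x0 :
  S != set0 -> (forall v, g v <= x0) ->
  exists2 v, v \in S & g v <= \big[minn/x0]_(v in S) g v.
Proof.
case/set0Pn => w wS gle.
apply: (big_ind (fun z => exists2 v, v \in S & g v <= z)).
- by exists w.
- move=> x y [v1 h1 l1] [v2 h2 l2]; case: (leqP x y) => xy.
  + by exists v1 => //; rewrite leq_min l1 (leq_trans l1 xy).
  + by exists v2 => //; rewrite leq_min l2 (leq_trans l2 (ltnW xy)) andbT.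
- by move=> i iS; exists i.
Qed.

Lemma edges_in_le (T : finType) (e : rel T) : forall k (S : {set T}), #|S| = k ->
  #|[set f in edges e | f \subset S]| <= degeneracy e * k.
Proof.
elim=> [|k IH] S hS.
- move/eqP: hS; rewrite cards_eq0 => /eqP ->.
  rewrite muln0 leqn0 cards_eq0; apply/eqP/setP => f; rewrite !inE.
  apply/negbTE/andP => [[fE fS]].
  case/imset2P: fE => x y _ _ hf.
  have : x \in f by rewrite hf !inE eqxx.
  by move/(subsetP fS); rewrite inE.
- set F := [set f in edges e | f \subset S].
  have S0 : S != set0 by rewrite -card_gt0 hS.
  have FE : F \subset edges e by apply/subsetP => f; rewrite inE => /andP[].
  have sub : is_subgraph e S F.
    rewrite /is_subgraph S0 FE /=; apply/forallP => f; apply/implyP.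
    by rewrite inE => /andP[].
  have [v vS hv] := @exists_le_bigmin _ S (sub_degree F) _ S0 (fun v => @deg_le T e F v FE).
  have hd : sub_degree F v <= degeneracy e.
    apply: leq_trans hv _.
    exact: (leq_bigmax_cond (F := fun SF : {set T} * {set {set T}} => min_degree SF.1 SF.2) (S, F) sub).
  have hS' : #|S :\ v| = k by move: hS; rewrite (cardsD1 v) vS add1n => -[].
  have := IH _ hS'.
  set F' := [set f in edges e | f \subset S :\ v] => hF'.
  have sF : F \subset [set f in F | v \in f] :|: F'.
    apply/subsetP => f fF; move: (fF); rewrite inE => /andP[fE fS].
    rewrite in_setU.
    case vf: (v \in f); first by apply/orP; left; apply/setIdP; split.
    apply/orP; right; rewrite inE fE /=.
    apply/subsetP => x xf; rewrite !inE (subsetP fS x xf) andbT.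
    by apply/eqP => xv; move: vf; rewrite -xv xf.
  apply: leq_trans (subset_leq_card sF) _.
  apply: leq_trans (leq_card_setU _ _) _.
  rewrite mulnS; apply: leq_add => //.
Qed.

Lemma nedges_le (T : finType) (e : rel T) : nedges e <= degeneracy e * #|T|.
Proof.
apply: leq_trans _ (@edges_in_le T e _ _ (cardsT T)).
apply: subset_leq_card; apply/subsetP => f fE; rewrite inE fE; exact: subsetT.
Qed.

Lemma norm_Lset (T I : finType) (C : I -> {set T}) :
  cover_norm C = \sum_v #|Lset C v|.
Proof.
rewrite /cover_norm.
transitivity (\sum_l \sum_v ((v \in C l) : nat)).
  apply: eq_bigr => l _; rewrite -sum1_card big_mkcond /=.
  by apply: eq_bigr => v _; case: (v \in C l).
rewrite exchange_big; apply: eq_bigr => v _.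
rewrite -sum1_card [RHS]big_mkcond /=.
by apply: eq_bigr => l _; rewrite inE; case: (v \in C l).
Qed.

Lemma pair_sum (T : finType) (g : T -> T -> nat) : (forall u v, g u v = g v u) ->
  2 * (\sum_u \sum_(v | enum_rank u < enum_rank v) g u v)
  = \sum_u \sum_(v | v != u) g u v.
Proof.
move=> gs; rewrite mul2n -addnn.
rewrite {2}(exchange_big_dep xpredT) //= -big_split /=.
apply: eq_bigr => u _.
rewrite big_mkcond [X in _ + X]big_mkcond [RHS]big_mkcond -big_split /=.
apply: eq_bigr => v _.
have -> : (v != u) = (enum_rank v != enum_rank u) by rewrite (inj_eq enum_rank_inj).
rewrite (gs v u).
case: (ltngtP (enum_rank u) (enum_rank v)) => h.
- have -> : enum_rank v != enum_rank u by apply/eqP => E; move: h; rewrite E ltnn.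
  by rewrite addn0.
- have -> : enum_rank v != enum_rank u by apply/eqP => E; move: h; rewrite E ltnn.
  by rewrite add0n.
- by rewrite (ord_inj h) eqxx.
Qed.

Lemma sum_ne (T : finType) (u : T) (k : nat) : \sum_(v | v != u) k = #|T|.-1 * k.
Proof. by rewrite sum_nat_const -(cardC1 u). Qed.

Local Open Scope ring_scope.

Theorem mainTheorem7 (R : realType) (a b : R) (ha : 0 < a) (hb : 0 < b) :
  exists c : R,
  forall (T : finType) (e : rel T) (I : finType) (C : I -> {set T}),
    simple_graph e ->
    (0 < nedges e)%N ->
    clique_cover e C ->
    composition_minimal e C ->
    (cover_norm C)%:R <= a * (nedges e)%:R ->
    (#|I|)%:R <= b * (clique_distance e)%:R ->
    ('C(nverts T, 2)%:R)^-1 *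
      (\sum_(u : T) \sum_(v : T | (enum_rank u < enum_rank v)%N)
         (minn #|Lset C u| #|Lset C v|)%:R)
      <= c * (minn (clique_distance e) (degeneracy e))%:R
    /\
    (nverts T)%:R^-1 *
      (\sum_(v : T) \sum_(l in Lset C v) (#|C l|)%:R)
      <= c * (clique_number e)%:R * (minn (clique_distance e) (degeneracy e))%:R.
Proof.
exists (a + b) => T e I C _ _ cc _ hX hI.
rewrite /nverts.
set n := #|T|.
set X := cover_norm C.
set m := nedges e.
set d := degeneracy e.
set s := clique_distance e.
set w := clique_number e.
set S := (\sum_(u : T) \sum_(v : T | (enum_rank u < enum_rank v)%N)
         (minn #|Lset C u| #|Lset C v|))%N.
set Q := (\sum_(v : T) \sum_(l in Lset C v) #|C l|)%N.
have -> : \sum_(u : T) \sum_(v : T | (enum_rank u < enum_rank v)%N)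
         (minn #|Lset C u| #|Lset C v|)%:R = S%:R :> R.
  by rewrite /S natr_sum; apply: eq_bigr => u _; rewrite natr_sum.
have -> : \sum_(v : T) \sum_(l in Lset C v) (#|C l|)%:R = Q%:R :> R.
  by rewrite /Q natr_sum; apply: eq_bigr => u _; rewrite natr_sum.
have hm : (m <= d * n)%N := @nedges_le T e.
have hXn : (X <= #|I| * n)%N.
  rewrite /X /cover_norm -sum_nat_const.
  by apply: leq_sum => l _; exact: max_card.
have hS2 : (2 * S = \sum_u \sum_(v | v != u) minn #|Lset C u| #|Lset C v|)%N.
  by apply: pair_sum => u v; rewrite minnC.
have hP1 : (2 * S <= n.-1 * X)%N.
  rewrite hS2 /X norm_Lset big_distrr /=; apply: leq_sum => u _.
  rewrite -(@sum_ne T u); apply: leq_sum => v _; exact: geq_minl.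
have hP2 : (2 * S <= n * n.-1 * #|I|)%N.
  rewrite hS2 -mulnA -sum_nat_const; apply: leq_sum => u _.
  rewrite -(@sum_ne T u); apply: leq_sum => v _; apply: leq_trans (geq_minl _ _) _.
  by rewrite -[X in (_ <= X)%N]cardsT; apply: subset_leq_card; apply/subsetP => l _; rewrite inE.
have hQ : (Q <= w * X)%N.
  rewrite /X norm_Lset big_distrr /=; apply: leq_sum => v _.
  rewrite mulnC -sum_nat_const; apply: leq_sum => l _.
  exact: (leq_bigmax_cond (F := fun K : {set T} => #|K|) (C l) (cc.1 l)).
have hC2 := bin2_2 n.
have rm : (m%:R <= d%:R * n%:R :> R) by rewrite -natrM ler_nat.
have rXn : (X%:R <= #|I|%:R * n%:R :> R) by rewrite -natrM ler_nat.
have rP1 : (2 * S%:R <= n.-1%:R * X%:R :> R) by rewrite -!natrM ler_nat.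
have rP2 : (2 * S%:R <= n%:R * n.-1%:R * #|I|%:R :> R) by rewrite -!natrM ler_nat.
have rQ : (Q%:R <= w%:R * X%:R :> R) by rewrite -natrM ler_nat.
have rC2 : ('C(n,2)%:R * 2 = n%:R * n.-1%:R :> R) by rewrite -!natrM hC2.
have p1 : (0 <= n.-1%:R :> R) by [].
have p2 : (0 <= n%:R :> R) by [].
have p3 : (0 <= d%:R :> R) by [].
have p4 : (0 <= s%:R :> R) by [].
have p5 : (0 <= w%:R :> R) by [].
have p6 : (0 <= X%:R :> R) by [].
have p7 : (0 <= #|I|%:R :> R) by [].
have p8 : (0 <= m%:R :> R) by [].
have p9 : (0 <= S%:R :> R) by [].
have p10 : (0 <= Q%:R :> R) by [].
have p11 : (0 <= 'C(n,2)%:R :> R) by [].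
have eql : forall x y : R, x = y -> x <= y by move=> x y ->.
split.
- have [C0|Cpos] := eqVneq ('C(n,2)%:R : R) 0.
    rewrite C0 invr0 mul0r; apply: mulr_ge0 => //; lra.
  have Cp : (0 < 'C(n,2)%:R :> R) by rewrite lt0r Cpos.
  rewrite ler_pdivrMl //.
  have [hsd|hsd] := leqP s d.
  +
    have h1 : 2 * S%:R <= 'C(n,2)%:R * 2 * (b * s%:R).
      rewrite rC2; apply: le_trans rP2 _; apply: ler_wpM2l => //; exact: mulr_ge0.
    have h2 : 0 <= 'C(n,2)%:R * (a * s%:R) by apply: mulr_ge0 => //; apply: mulr_ge0 => //; lra.
    lra.
  + have h1 : 2 * S%:R <= 'C(n,2)%:R * 2 * (a * d%:R).
      rewrite rC2; apply: le_trans rP1 _.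
      have : X%:R <= a * (d%:R * n%:R) by apply: le_trans hX _; apply: ler_wpM2l => //; lra.
      move=> hh; apply: le_trans (ler_wpM2l p1 hh) _; apply: eql; ring.
    have h2 : 0 <= 'C(n,2)%:R * (b * d%:R) by apply: mulr_ge0 => //; apply: mulr_ge0 => //; lra.
    lra.
- have [N0|Npos] := eqVneq (n%:R : R) 0.
    rewrite N0 invr0 mul0r; apply: mulr_ge0 => //; apply: mulr_ge0 => //; lra.
  have Np : (0 < n%:R :> R) by rewrite lt0r Npos.
  rewrite ler_pdivrMl //.
  apply: le_trans rQ _.
  have [hsd|hsd] := leqP s d.
  + have h1 : X%:R <= n%:R * (b * s%:R).
      apply: le_trans rXn _; rewrite mulrC; apply: ler_wpM2l => //.
    have h2 : 0 <= n%:R * (a * s%:R) by apply: mulr_ge0 => //; apply: mulr_ge0 => //; lra.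
    have h3 : w%:R * X%:R <= w%:R * (n%:R * (b * s%:R)) by apply: ler_wpM2l.
    have h4 : 0 <= w%:R * (n%:R * (a * s%:R)) by apply: mulr_ge0.
    apply: le_trans h3 _; apply: (le_trans (y := w%:R * (n%:R * (b * s%:R)) + w%:R * (n%:R * (a * s%:R)))).
      lra.
    apply: eql; ring.
  + have h1 : X%:R <= n%:R * (a * d%:R).
      apply: le_trans hX _; apply: le_trans (ler_wpM2l (ltW ha) rm) _; apply: eql; ring.
    have h2 : 0 <= n%:R * (b * d%:R) by apply: mulr_ge0 => //; apply: mulr_ge0 => //; lra.
    have h3 : w%:R * X%:R <= w%:R * (n%:R * (a * d%:R)) by apply: ler_wpM2l.
    have h4 : 0 <= w%:R * (n%:R * (b * d%:R)) by apply: mulr_ge0.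
    apply: le_trans h3 _; apply: (le_trans (y := w%:R * (n%:R * (a * d%:R)) + w%:R * (n%:R * (b * d%:R)))).
      lra.
    apply: eql; ring.
Qed.
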